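(* In the setting of the context, for every fixed $i\in\{1,\dots,n\}$, $$\prod_{(x,y)\in\mathfrak{X}}\frac{\max\big(1,|\beta_i(x,y)-m(x,y)|\big)}{e^6s(ns)^{2s/n}\,h^{1/n}\,(2Y_S+7/2)}\le 1.$$
   Context: Setting: $n\ge3$; $F(x,y)=\sum_{i=0}^s a_ix^{n_i}y^{n-n_i}\in\mathbb{Z}[x,y]$ of degree $n$, irreducible over $\mathbb{Q}$, all $a_i\neq0$, $0=n_0<\dots<n_s=n$, discriminant $D$. $R=n^{800\log^2n}$; $h$ a positive integer and $\kappa>1$ an integer with $h\le |D|^{\frac{1}{2(n-1)(2+1/\kappa)}}/\big((3R)^{n/2}(ns)^{2s+n}\big)$; $Y_S=e^6s(ns)^{2s/n}h^{1/(\kappa n)}$. Write $F(x,y)=a\prod_{i=1}^n(x-\alpha_iy)$ ($\alpha_i$ the roots of $F(x,1)$) and $L_i(x,y)=x-\alpha_iy$. A ''solution'' is a pair $(x,y)\in\mathbb{Z}^2$ with $\gcd(x,y)=1$ and $1\le|F(x,y)|\le h$, with $(x,y)$ and $(-x,-y)$ identified. Assume there is a solution with $0\le y\le Y_S$, and fix one such, $(x_0,y_0)$, with $y_0\ge0$ minimal. Index the roots so that $|L_1(x_0,y_0)|=\min_i|L_i(x_0,y_0)|$. There is at most one solution $(x^*,y^* )$ with $0<y^*\le Y_S$ and $|L_1(x^*,y^* )|<1/(2Y_S)$; let $\mathbf{A}=\{(x_0,y_0)\}$ together with $(x^*,y^* )$ if it exists. For a primitive $(x,y)$ choose integers $x',y'$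 with $x'y-xy'=1$ and set $\beta_j(x,y)=-L_j(x',y')/L_j(x,y)$ (so that $F(ux+wx',uy+wy')=F(x,y)\prod_j(u-\beta_j(x,y)w)$), and let $m(x,y)$ be an integer with $|\mathrm{Re}\,\beta_1(x,y)-m(x,y)|\le 1/2$. For $1\le i\le n$, $\mathfrak{X}_i$ is the set of solutions $(x,y)\notin\mathbf{A}$ with $1\le y\le Y_S$ and $|L_i(x,y)|\le\frac{1}{2y}$. For each nonempty $\mathfrak{X}_i$ let $(x^{(i)},y^{(i)})$ be an element of $\mathfrak{X}_i$ with largest $y$. $\mathfrak{X}$ is the set of solutions $(x,y)\notin\mathbf{A}$ with $1\le y\le Y_S$, with all the elements $(x^{(1)},y^{(1)}),\dots,(x^{(n)},y^{(n)})$ removed. *)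

(* Defs.v *)
From HB Require Import structures.
From mathcomp Require Import all_boot all_order all_algebra.
From mathcomp Require Import all_classical all_reals all_analysis.
From mathcomp Require Import complex.

Set Implicit Arguments.
Unset Strict Implicit.
Unset Printing Implicit Defensive.

Import Order.TTheory GRing.Theory Num.Theory.
Local Open Scope ring_scope.

(* The binary form F(x,y) = sum_{i=0}^s a_i x^{n_i} y^{n-n_i},
   evaluated in any commutative ring T; a i = a_i, e i = n_i. *)
Definition Fval (n s : nat) (a : nat -> int) (e : nat -> nat)
    (T : comPzRingType) (x y : T) : T :=
  \sum_(i < s.+1) (a i)%:~R * x ^+ (e i) * y ^+ (n - e i).

Definition Fpoly (s : nat) (a : nat -> int) (e : nat -> nat) : {poly rat} :=
  \sum_(i < s.+1) ((a i)%:~R)%:P * 'X^(e i).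

Definition cabs (R : realType) (z : R[i]) : R := ComplexField.Normc.normc z.

Section Setting.
Variables (R : realType) (n s : nat) (a : nat -> int) (e : nat -> nat)
          (h kappa : nat) (alpha : nat -> R[i]).

(* discriminant of F : a^{2n-2} prod_{i<j} (alpha_i - alpha_j)^2,
   with a = a_s the coefficient of x^n *)
Definition discF : R[i] :=
  ((a s)%:~R) ^+ (2 * n - 2) *
  \prod_(i < n) \prod_(j < n | (i < j)%N) (alpha i - alpha j) ^+ 2.

Definition Rconst : R := powR (n%:R) (800 * (ln (n%:R)) ^+ 2).

Definition YS : R :=
  expR 6 * s%:R * powR ((n * s)%:R) (2 * s%:R / n%:R)
    * powR (h%:R) (1 / (kappa%:R * n%:R)).

(* L_j(x,y) = x - alpha_j y  (roots indexed 0..n-1; paper's L_1 is L 0) *)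
Definition Lj (j : nat) (x y : int) : R[i] := x%:~R - alpha j * y%:~R.

Definition is_sol (x y : int) : Prop :=
  gcdz x y = 1 /\ 1 <= `|Fval n s a e x y| /\ `|Fval n s a e x y| <= h%:Z.

Variables (x0 y0 : int).

Definition inA (x y : int) : Prop :=
  (x, y) = (x0, y0) \/
  (is_sol x y /\ 0 < y /\ (y%:~R : R) <= YS /\ cabs (Lj 0 x y) < 1 / (2 * YS)).

Definition inXi (i : nat) (x y : int) : Prop :=
  is_sol x y /\ ~ inA x y /\ 1 <= y /\ (y%:~R : R) <= YS /\
  cabs (Lj i x y) <= 1 / (2 * (y%:~R : R)).

Variable sel : nat -> int * int.

Definition inX (x y : int) : Prop :=
  is_sol x y /\ ~ inA x y /\ 1 <= y /\ (y%:~R : R) <= YS /\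
  ~ (exists i, (i < n)%N /\ (exists x' y', inXi i x' y') /\ sel i = (x, y)).

Variables (xp yp : int -> int -> int).

Definition beta (j : nat) (x y : int) : R[i] :=
  - Lj j (xp x y) (yp x y) / Lj j x y.

End Setting.

(* Main.v *)
Require Import Defs.
From HB Require Import structures.
From mathcomp Require Import all_boot all_order all_algebra.
From mathcomp Require Import all_classical all_reals all_analysis.
From mathcomp Require Import complex.
From mathcomp Require Import ring lra.
From Stdlib Require Import Lia.
From mathcomp Require Import zify.
Import Order.TTheory GRing.Theory Num.Theory.
Local Open Scope ring_scope.

Section Helpers.
Variable R : realType.
Implicit Types z w : R[i].

Lemma cabs_ge0 z : 0 <= cabs z.
Proof. by case: z => a b; exact: sqrtr_ge0. Qed.

Lemma cabsD z w : cabs (z + w) <= cabs z + cabs w.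
Proof. exact: le_normcD. Qed.

Lemma cabsN z : cabs (- z) = cabs z.
Proof. exact: normcN. Qed.

Lemma cabsM z w : cabs (z * w) = cabs z * cabs w.
Proof. exact: ComplexField.Normc.normcM. Qed.

Lemma cabsV z : cabs z^-1 = (cabs z)^-1.
Proof. exact: ComplexField.Normc.normcV. Qed.

Lemma cabs_real (r : R) : cabs ((r%:C)%C) = `|r|.
Proof. by rewrite /cabs /= expr0n /= addr0 sqrtr_sqr. Qed.

Lemma cabs_Re z : `|complex.Re z| <= cabs z.
Proof.
case: z => a b /=; rewrite -sqrtr_sqr; apply: ler_wsqrtr.
by rewrite lerDl sqr_ge0.
Qed.

Lemma intC (k : int) : (k%:~R : R[i]) = ((k%:~R : R)%:C)%C.
Proof. by rewrite rmorph_int. Qed.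

Lemma cabs_int (k : int) : cabs (k%:~R : R[i]) = `|k%:~R : R|.
Proof. by rewrite intC cabs_real. Qed.

Lemma Re_realB (r : R) z : complex.Re ((r%:C)%C - z) = r - complex.Re z.
Proof. by case: z => a b. Qed.

End Helpers.
Arguments cabs_ge0 {R}.
Arguments cabsD {R}.
Arguments cabsN {R}.
Arguments cabsM {R}.
Arguments cabsV {R}.
Arguments cabs_real {R}.
Arguments cabs_Re {R}.
Arguments intC {R}.
Arguments cabs_int {R}.
Arguments Re_realB {R}.

Lemma bexpr (F : fieldType) (X Y X' Y' a : F) :
  Y != 0 -> X - a * Y != 0 -> X' * Y - X * Y' = 1 ->
  - (X' - a * Y') / (X - a * Y) = - (Y' / Y) - 1 / (Y * (X - a * Y)).
Proof.
move=> Y0 L0 E; rewrite -E; field.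
by rewrite Y0 L0.
Qed.

Lemma prod4 (R : realFieldType) (E a b c : R) :
  7 <= E -> 1 <= a -> 1 <= b -> 1 <= c -> 2 <= E * a * b * c.
Proof.
move=> hE ha hb hc; have := mulr_ege1 (mulr_ege1 ha hb) hc.
rewrite -!mulrA; move: (a * (b * c)) => t; nra.
Qed.

Lemma inv_bound (R : realFieldType) (K Y c : R) :
  0 < K -> 1 <= Y -> 1 / (2 * K) <= c -> (Y * c)^-1 <= 2 * K.
Proof.
move=> K0 Y1 hc.
have K2 : 0 < 2 * K by lra.
move: hc; rewrite ler_pdivrMr // => hc.
have c0 : 0 < c by nra.
rewrite -[_^-1]mul1r ler_pdivrMr; last by apply: mulr_gt0 => //; lra.
nra.
Qed.

Arguments prod4 {R}.
Arguments inv_bound {R}.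
Lemma gapb (R : realFieldType) (kk Yv Ys K cs ci : R) : (1 <= kk ->
 1 <= Yv ->
 Yv <= Ys ->
 Ys <= K ->
 0 <= cs ->
 0 <= ci ->
 cs * (2 * Ys) <= 1 -> kk <= Ys * ci + Yv * cs -> 1 <= ci * (2 * K)).
Proof.
move=> h1 h2 h3 h4 h5 h6 h7 h8.
have : Yv * cs <= Ys * cs by apply: ler_wpM2r.
have : Ys * ci <= K * ci by apply: ler_wpM2r.
lra.
Qed.
Arguments gapb {R}.
Theorem lemma4p5
  (R : realType) (n s : nat) (a : nat -> int) (e : nat -> nat)
  (h kappa : nat) (alpha : nat -> R[i])
  (x0 y0 : int) (sel : nat -> int * int) (xp yp m : int -> int -> int)
  (i : nat) (S : seq (int * int)) :
  (* setting: the form F *)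
  (3 <= n)%N ->
  e 0%N = 0%N ->
  (forall k, (k < s)%N -> (e k < e k.+1)%N) ->
  e s = n ->
  (forall k, (k <= s)%N -> a k != 0) ->
  irreducible_poly (Fpoly s a e) ->
  (* alpha_1..alpha_n (here alpha 0 .. alpha (n-1)) are the roots of F(x,1) *)
  (forall z : R[i], Fval n s a e z 1 = (a s)%:~R * \prod_(j < n) (z - alpha j)) ->
  (* h, kappa *)
  (0 < h)%N -> (1 < kappa)%N ->
  (h%:R : R) <=
    powR (cabs (discF n s a alpha))
         (1 / (2 * (n - 1)%:R * (2 + 1 / kappa%:R)))
    / (powR (3 * Rconst R n) (n%:R / 2) * ((n * s) ^ (2 * s + n))%:R) ->
  (* (x0,y0): a solution with 0 <= y0 <= Y_S and y0 minimal *)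
  is_sol n s a e h x0 y0 -> 0 <= y0 -> (y0%:~R : R) <= YS R n s h kappa ->
  (forall x y, is_sol n s a e h x y -> 0 <= y -> (y%:~R : R) <= YS R n s h kappa ->
     y0 <= y) ->
  (* indexing of the roots: |L_1(x0,y0)| minimal *)
  (forall j, (j < n)%N -> cabs (Lj alpha 0 x0 y0) <= cabs (Lj alpha j x0 y0)) ->
  (* choice of (x^(j), y^(j)) : an element of frak X_j with largest y *)
  (forall j, (j < n)%N -> (exists x y, inXi n s a e h kappa alpha x0 y0 j x y) ->
     inXi n s a e h kappa alpha x0 y0 j (sel j).1 (sel j).2 /\
     (forall x y, inXi n s a e h kappa alpha x0 y0 j x y -> y <= (sel j).2)) ->
  (* choice of x', y' with x'y - xy' = 1, and of m(x,y) *)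
  (forall x y, gcdz x y = 1 -> xp x y * y - x * yp x y = 1) ->
  (forall x y, gcdz x y = 1 ->
     `|complex.Re (beta alpha xp yp 0 x y) - (m x y)%:~R| <= 1 / 2 :> R) ->
  (* the fixed index i and an enumeration S of the finite set frak X *)
  (i < n)%N ->
  uniq S ->
  (forall x y, (x, y) \in S <-> inX n s a e h kappa alpha x0 y0 sel x y) ->
  \prod_(p <- S)
     (Num.max 1 (cabs (beta alpha xp yp i p.1 p.2 - (m p.1 p.2)%:~R))
      / (expR 6 * s%:R * powR ((n * s)%:R) (2 * s%:R / n%:R)
         * powR (h%:R) (1 / n%:R) * (2 * YS R n s h kappa + 7 / 2)))
  <= 1.
Proof.
move=> n3 e0 _ es _ _ _ h0 _ _ _ _ _ _ _ Hsel Hxp Hm Hi _ HS.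
set K := YS R n s h kappa.
set C := expR 6 * s%:R * powR ((n * s)%:R) (2 * s%:R / n%:R) * powR (h%:R) (1 / n%:R).
have s1 : (1 <= s)%N.
  case: (posnP s) => [s0|//]; by rewrite s0 e0 in es; rewrite -es in n3.
have pow1 : forall (b : nat) (r : R), (1 <= b)%N -> 0 <= r -> 1 <= powR (b%:R) r.
  move=> b r b1 r0; have b1' : 1 <= b%:R :> R by rewrite ler1n.
  apply: le_trans (ler_powR b1' r0); by rewrite powRr0.
have ns1 : (1 <= n * s)%N by rewrite muln_gt0 s1 andbT; apply: leq_trans n3.
have e7 : 7 <= expR 6 :> R.
  by apply: le_trans (expR_ge1Dx _); lra.
have s1R : 1 <= s%:R :> R by rewrite ler1n.
have C2 : 2 <= C.
  rewrite /C; have := pow1 _ (2 * s%:R / n%:R) ns1.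
  have := pow1 _ (1 / n%:R) h0.
  have p1 : 0 <= 2 * s%:R / n%:R :> R by apply: divr_ge0 => //; apply: mulr_ge0.
  have p2 : 0 <= 1 / n%:R :> R by apply: divr_ge0.
  move=> /(_ p2) A /(_ p1) B.
  exact: prod4.
have K1 : 1 <= K.
  rewrite /K /YS; have := pow1 _ (2 * s%:R / n%:R) ns1.
  have := pow1 _ (1 / (kappa%:R * n%:R)) h0.
  have p1 : 0 <= 2 * s%:R / n%:R :> R by apply: divr_ge0 => //; apply: mulr_ge0.
  have p2 : 0 <= 1 / (kappa%:R * n%:R) :> R by apply: divr_ge0 => //; apply: mulr_ge0.
  move=> /(_ p2) A /(_ p1) B.
  have := prod4 _ _ _ _ e7 s1R B A; lra.
have K0 : 0 < K by lra.
have D0 : 0 < C * (2 * K + 7 / 2) by apply: mulr_gt0; lra.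
rewrite big_seq; apply: prodr_ile1 => -[x y] /HS HX /=.
have Hb : cabs (beta alpha xp yp i x y - (m x y)%:~R) <= 4 * K + 1 / 2.
  case: HX => [[g [F1 Fh]] [nA [y1 [yK nsel]]]].
  set Yr : R := y%:~R.
  have Y1 : 1 <= Yr by rewrite /Yr ler1z.
  have yK' : Yr <= K := yK.
  have y0' : 0 < y by exact: (lt_le_trans ltr01 y1).
  have L0b : 1 / (2 * K) <= cabs (Lj alpha 0 x y).
    rewrite leNgt; apply/negP => lt; apply: nA; right.
    by split; [exact: (conj g (conj F1 Fh)) | split].
  have Lib : 1 / (2 * K) <= cabs (Lj alpha i x y).
    case: (pselect (inXi n s a e h kappa alpha x0 y0 i x y)) => Hxi; last first.
      have : 1 / (2 * Yr) < cabs (Lj alpha i x y).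
        rewrite ltNge; apply/negP => le; apply: Hxi.
        by split; [exact: (conj g (conj F1 Fh))|split].
      move=> H; apply: le_trans (ltW H).
      have : (2 * K)^-1 <= (2 * Yr)^-1.
        by rewrite lef_pV2 ?posrE; lra.
      by rewrite !mul1r.
    have [Hs Hmax] := Hsel i Hi (ex_intro _ x (ex_intro _ y Hxi)).
    have yle := Hmax x y Hxi.
    have ne : sel i <> (x, y).
      by move=> eq; apply: nsel; exists i; split=>//; split=>//; exists x, y.
    move: Hs yle ne; case: (sel i) => [xs ys] /= Hs yle ne.
    case: Hs => [[gs _] [_ [ys1 [ysK Ls]]]].
    have ys0 : 0 < ys by exact: lt_le_trans ltr01 ys1.
    have nz : x * ys - xs * y != 0.
      apply/eqP => /eqP; rewrite subr_eq0 => /eqP eq.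
      have d1 : (ys %| y)%Z.
        have : (ys %| xs * y)%Z by rewrite -eq dvdz_mull // dvdzz.
        by rewrite Gauss_dvdzr // /coprimez gcdzC gs.
      case/dvdzP: d1 => k hk.
      have kp : 0 < k by move: y0'; rewrite hk pmulr_lgt0.
      have k1 : 1 <= k by rewrite -gtz0_ge1.
      have yys : ys <= y by rewrite hk; apply: ler_peMl => //; exact: ltW.
      have eyy : y = ys by apply/eqP; rewrite eq_le yle yys.
      subst ys.
      have ynz : y != 0 by rewrite gt_eqF.
      have exx : x = xs by exact: (mulIf ynz eq).
      by subst xs; apply: ne.
    have k1 : 1 <= `|(x * ys - xs * y)%:~R : R|.
      by rewrite -intr_norm ler1z -gtz0_ge1 normr_gt0.
    have idk : ((x * ys - xs * y)%:~R : R[i]) =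
        ys%:~R * Lj alpha i x y - y%:~R * Lj alpha i xs ys.
      by rewrite /Lj intrB !intrM; ring.
    have := cabsD (ys%:~R * Lj alpha i x y) (- (y%:~R * Lj alpha i xs ys)).
    rewrite -idk cabs_int cabsN !cabsM !cabs_int.
    rewrite (ger0_norm (_ : 0 <= (ys%:~R : R))); last by rewrite ler0z ltW.
    rewrite (ger0_norm (_ : 0 <= (y%:~R : R))); last by rewrite ler0z ltW.
    move: Ls; rewrite ler_pdivlMr; last by rewrite mulr_gt0 // ltr0z.
    rewrite ler_pdivrMr; last lra.
    have := cabs_ge0 (Lj alpha i x y); have := cabs_ge0 (Lj alpha i xs ys).
    have : (ys%:~R : R) <= K by [].
    have : Yr <= ys%:~R by rewrite /Yr ler_int.
    move: k1 Y1.
    move: (ys%:~R : R) (cabs (Lj alpha i x y)) (cabs (Lj alpha i xs ys)) => Ys ci cs.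
    rewrite /Yr; move: (y%:~R : R) (`|_|) => Yv kk; exact: gapb.
  have E := Hxp x y g.
  have Ec : ((xp x y)%:~R : R[i]) * y%:~R - x%:~R * (yp x y)%:~R = 1.
    by have := congr1 (fun k : int => (k%:~R : R[i])) E; rewrite /= intrB !intrM.
  have Yc0 : (y%:~R : R[i]) != 0 by rewrite intr_eq0 gt_eqF.
  have K2 : 0 < 1 / (2 * K) by rewrite mul1r invr_gt0; lra.
  have Lnz : forall j, 1 / (2 * K) <= cabs (Lj alpha j x y) -> Lj alpha j x y != 0.
    move=> j hj; apply/eqP => h0'; move: hj; rewrite h0'.
    have -> : cabs (0 : R[i]) = 0 by exact: ComplexField.Normc.normc0.
    lra.
  have bj : forall j, Lj alpha j x y != 0 -> beta alpha xp yp j x y =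
      - ((yp x y)%:~R / y%:~R) - 1 / (y%:~R * Lj alpha j x y).
    by move=> j nz; rewrite /beta /Lj; apply: bexpr.
  set q : R := - ((yp x y)%:~R / Yr) - (m x y)%:~R.
  have qC : ((q%:C)%C : R[i]) = - ((yp x y)%:~R / y%:~R) - (m x y)%:~R.
    by rewrite /q /Yr rmorphB rmorphN fmorph_div !rmorph_int.
  have qC' : (((q + (m x y)%:~R)%:C)%C : R[i]) = - ((yp x y)%:~R / y%:~R).
    by rewrite /q subrK /Yr rmorphN fmorph_div !rmorph_int.
  set w0 := 1 / ((y%:~R : R[i]) * Lj alpha 0 x y).
  set wi := 1 / ((y%:~R : R[i]) * Lj alpha i x y).
  have eqI : beta alpha xp yp i x y - (m x y)%:~R = (q%:C)%C - wi.
    by rewrite qC bj ?Lnz // /wi addrAC.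
  have eq0 : beta alpha xp yp 0 x y = ((q + (m x y)%:~R)%:C)%C - w0.
    by rewrite qC' bj ?Lnz.
  have hq := Hm x y g; rewrite eq0 Re_realB in hq.
  have hq' : `|q| <= 1 / 2 + cabs w0.
    have := cabs_Re w0; move: hq.
    have -> : q + (m x y)%:~R - complex.Re w0 - (m x y)%:~R = q - complex.Re w0 by ring.
    move=> hq hr; have := ler_normD (q - complex.Re w0) (complex.Re w0).
    rewrite subrK; lra.
  have hw : forall j, 1 / (2 * K) <= cabs (Lj alpha j x y) ->
      cabs (1 / ((y%:~R : R[i]) * Lj alpha j x y)) <= 2 * K.
    move=> j hj; rewrite mul1r cabsV cabsM cabs_int ger0_norm; last by rewrite ler0z ltW.
    exact: inv_bound.
  have := hw 0%N L0b; have := hw i Lib; rewrite -/w0 -/wi => h1 h2.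
  rewrite eqI; apply: le_trans (cabsD _ _) _; rewrite cabsN cabs_real.
  lra.
apply/andP; split.
  apply: divr_ge0; last exact: ltW.
  by rewrite le_max ler01.
rewrite ler_pdivrMr // mul1r ge_max; apply/andP; split; nra.
Qed.
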